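(* Let $M$ be an MT-algebra and define a binary relation $\prec$ on $M$ by $a\prec b$ iff there is $c\in\mathrm{cons}\,M$ with $a\le c\le b$. Then $\prec$ is a de Vries proximity on $M$ if and only if $M$ is a $T_D$-algebra.
   Context: An MT-algebra is a pair $(M,\square)$ where $M$ is a complete boolean algebra and $\square:M\to M$ satisfies $\square 1=1$, $\square(a\wedge b)=\square a\wedge\square b$, $\square a\le a$, $\square a\le\square\square a$. Write $\Diamond a=\neg\square\neg a$. An element $a$ is open if $\square a=a$, closed if $\Diamond a=a$, and locally closed if $a=\square b\wedge\Diamond c$ for some $b,c\in M$; $\mathcal O M$, $\mathcal C M$, $\mathcal{LC} M$ denote the sets of open, closed, locally closed elements. $\mathrm{cons}\,M$ is the set of finite joins of elements of $\mathcal{LC}M$ (equivalently, the boolean subalgebra of $M$ generated by $\mathcal O M$). $M$ is a $T_D$-algebra if every element of $M$ is a join of elements of $\mathcal{LC}M$. A de Vries proximity on a complete boolean algebra $A$ is a binary relation $\prec$ satisfying: $1\prec 1$; $a\prec c$ implies $a\le c$; $a\le a'\prec c'\le c$ implies $a\prec c$; $a\prec c,d$ implies $a\prec c\wedge d$; $a\prec c$ implies $\neg c\prec\neg a$; $a\prec c$ implies there is $b$ with $a\prec b\prec c$; and $a=\bigvee\{c\in A: c\prec a\}$ for every $a\in A$. *)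

(* Defs.v *)
From mathcomp Require Import all_boot all_order.
Set Implicit Arguments. Unset Strict Implicit. Unset Printing Implicit Defensive.
Import Order.TTheory.
Local Open Scope order_scope.

(* A boolean algebra is a [ctbDistrLatticeType d] (complemented distributive
   lattice with top and bottom); completeness is added as a Prop. *)
Section Defs.
Context {d : Order.disp_t} {T : ctbDistrLatticeType d}.

Definition is_join (S : T -> Prop) (j : T) : Prop :=
  (forall x, S x -> x <= j) /\ (forall u, (forall x, S x -> x <= u) -> j <= u).

Definition complete_lattice : Prop := forall S : T -> Prop, exists j, is_join S j.

Definition MT_operator (box : T -> T) : Prop :=
  [/\ box \top = \top,
      forall a b, box (Order.meet a b) = Order.meet (box a) (box b),
      forall a, box a <= a &
      forall a, box a <= box (box a)].

Definition dia (box : T -> T) (a : T) : T := ~` box (~` a).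

Definition is_open (box : T -> T) (a : T) : Prop := box a = a.
Definition is_closed (box : T -> T) (a : T) : Prop := dia box a = a.
Definition locally_closed (box : T -> T) (a : T) : Prop :=
  exists b c, a = box b `&` dia box c.

Definition in_cons (box : T -> T) (a : T) : Prop :=
  exists s : seq T, (forall x, x \in s -> locally_closed box x) /\
                    a = \join_(x <- s) x.

Definition TD_algebra (box : T -> T) : Prop :=
  forall a, exists S : T -> Prop, (forall x, S x -> locally_closed box x) /\ is_join S a.

Definition cons_prox (box : T -> T) (a b : T) : Prop :=
  exists c, in_cons box c /\ a <= c /\ c <= b.

Definition de_Vries_proximity (R : T -> T -> Prop) : Prop :=
  R \top \top /\
  (forall a c, R a c -> a <= c) /\
  (forall a a' c' c, a <= a' -> R a' c' -> c' <= c -> R a c) /\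
  (forall a c e, R a c -> R a e -> R a (Order.meet c e)) /\
  (forall a c, R a c -> R (~` c) (~` a)) /\
  (forall a c, R a c -> exists b, R a b /\ R b c) /\
  (forall a, is_join (fun c => R c a) a).

End Defs.

(* Main.v *)
Require Import Defs.
From mathcomp Require Import all_boot all_order.
Local Open Scope order_scope.
Import Order.TTheory Order.CTBDistrLatticeTheory.

Section Aux.
Context {d : Order.disp_t} {M : ctbDistrLatticeType d} (box : M -> M).
Hypothesis hMT : MT_operator box.

Lemma box_mono a b : a <= b -> box a <= box b.
Proof.
case: hMT => _ hI _ _ => /meet_idPl <-; rewrite hI; exact: leIr.
Qed.

Lemma dia_mono a b : a <= b -> dia box a <= dia box b.
Proof. by move=> h; rewrite /dia leC; apply: box_mono; rewrite leC. Qed.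

Lemma dia_ext a : a <= dia box a.
Proof. case: hMT => _ _ h _; by rewrite /dia lexC h. Qed.

Lemma dia_idem a : dia box (dia box a) <= dia box a.
Proof. case: hMT => _ _ _ h; by rewrite /dia Order.CTBDistrLatticeTheory.complK leC h. Qed.

Lemma dia_top : dia box \top = \top.
Proof.
case: hMT => _ _ h _; rewrite /dia Order.CTBDistrLatticeTheory.compl1.
have -> : box \bot = \bot by apply/eqP; rewrite eq_le h le0x.
by rewrite Order.CTBDistrLatticeTheory.compl0.
Qed.

Lemma LC_meet x y : locally_closed box x -> locally_closed box y ->
  locally_closed box (x `&` y).
Proof.
case: hMT => _ hI _ _.
move=> [b [c ->]] [b' [c' ->]]; exists (b `&` b'), (dia box c `&` dia box c').
rewrite hI.
have -> : dia box (dia box c `&` dia box c') = dia box c `&` dia box c'.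
  apply/eqP; rewrite eq_le dia_ext andbT lexI.
  apply/andP; split.
    exact: (le_trans (dia_mono _ _ (leIl _ _)) (dia_idem _)).
  exact: (le_trans (dia_mono _ _ (leIr _ _)) (dia_idem _)).
by rewrite -!meetA (meetCA (dia box c)).
Qed.

Lemma LC_top : locally_closed box \top.
Proof. case: hMT => h _ _ _; exists \top, \top; by rewrite h dia_top meetxx. Qed.

Lemma cons_LC x : locally_closed box x -> Defs.in_cons box x.
Proof.
move=> h; exists [:: x]; split; first by move=> y; rewrite inE => /eqP ->.
by rewrite big_cons big_nil joinx0.
Qed.

Lemma cons_join a b : Defs.in_cons box a -> Defs.in_cons box b -> Defs.in_cons box (a `|` b).
Proof.
move=> [s [hs ->]] [t [ht ->]]; exists (s ++ t); split; last by rewrite big_cat.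
by move=> x; rewrite mem_cat => /orP [/hs|/ht].
Qed.

Lemma cons_bot : Defs.in_cons box \bot.
Proof. by exists [::]; split => //; rewrite big_nil. Qed.

Lemma cons_meet_LC x a : locally_closed box x -> Defs.in_cons box a ->
  Defs.in_cons box (x `&` a).
Proof.
move=> hx [s [hs ->]]; elim: s hs => [|y s IH] hs.
  by rewrite big_nil meetx0; exact: cons_bot.
rewrite big_cons meetUr; apply: cons_join.
  by apply: cons_LC; apply: LC_meet => //; apply: hs; rewrite inE eqxx.
by apply: IH => z hz; apply: hs; rewrite inE hz orbT.
Qed.

Lemma cons_meet a b : Defs.in_cons box a -> Defs.in_cons box b -> Defs.in_cons box (a `&` b).
Proof.
move=> [s [hs ->]] hb; elim: s hs => [|y s IH] hs.
  by rewrite big_nil meet0x; exact: cons_bot.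
rewrite big_cons meetUl; apply: cons_join.
  by apply: cons_meet_LC => //; apply: hs; rewrite inE eqxx.
by apply: IH => z hz; apply: hs; rewrite inE hz orbT.
Qed.

Lemma cons_compl_LC x : locally_closed box x -> Defs.in_cons box (~` x).
Proof.
case: hMT => htop _ _ _.
move=> [b [c ->]]; rewrite Order.CTBDistrLatticeTheory.complI.
apply: cons_join; apply: cons_LC.
  exists \top, (~` b); by rewrite htop meet1x /dia Order.CTBDistrLatticeTheory.complK.
exists (~` c), \top; rewrite dia_top meetx1 /dia.
by rewrite Order.CTBDistrLatticeTheory.complK.
Qed.

Lemma cons_compl a : Defs.in_cons box a -> Defs.in_cons box (~` a).
Proof.
move=> [s [hs ->]]; elim: s hs => [|y s IH] hs.
  rewrite big_nil Order.CTBDistrLatticeTheory.compl0; exact: cons_LC LC_top.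
rewrite big_cons Order.CTBDistrLatticeTheory.complU; apply: cons_meet.
  by apply: cons_compl_LC; apply: hs; rewrite inE eqxx.
by apply: IH => z hz; apply: hs; rewrite inE hz orbT.
Qed.

End Aux.

Lemma join_seq_le {d : Order.disp_t} {M : ctbDistrLatticeType d} (s : seq M) u :
  (forall x, x \in s -> x <= u) -> \join_(x <- s) x <= u.
Proof.
elim: s => [|y s IH] h; first by rewrite big_nil le0x.
rewrite big_cons leUx h ?inE ?eqxx //= IH // => z hz.
by apply: h; rewrite inE hz orbT.
Qed.

Lemma le_join_seq {d : Order.disp_t} {M : ctbDistrLatticeType d} (s : seq M) x :
  x \in s -> x <= \join_(y <- s) y.
Proof.
elim: s => [|y s IH] //; rewrite inE big_cons => /orP [/eqP ->|h].
  exact: leUl.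
exact: le_trans (IH h) (leUr _ _).
Qed.

Theorem lemma3p5 (d : Order.disp_t) (M : ctbDistrLatticeType d)
  (box : M -> M) :
  complete_lattice (T := M) -> MT_operator box ->
  (de_Vries_proximity (cons_prox box) <-> TD_algebra box).
Proof.
move=> _ hMT; split.
- move=> [_ [_ [_ [_ [_ [_ hJ]]]]]] a.
  exists (fun x => locally_closed box x /\ x <= a); split; first by move=> x [].
  split; first by move=> x [].
  move=> u hu; case: (hJ a) => _ h; apply: h => c [e [[s [hs ->]] [hce hea]]].
  apply: (le_trans hce); apply: join_seq_le => x xs.
  apply: hu; split; first exact: hs.
  apply: le_trans hea; exact: le_join_seq.
- move=> hTD; split; [|split; [|split; [|split; [|split; [|split]]]]].
  + exists \top; split; first by apply: cons_LC; apply: LC_top.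
    by rewrite lexx.
  + by move=> a c [e [_ [h1 h2]]]; exact: le_trans h2.
  + move=> a a' c' c h1 [e [he [h2 h3]]] h4; exists e; split => //.
    by split; [exact: le_trans h2|exact: le_trans h4].
  + move=> a c e [x [hx [h1 h2]]] [y [hy [h3 h4]]]; exists (x `&` y).
    split; first exact: cons_meet hMT _ _ hx hy.
    by rewrite lexI h1 h3 leI2.
  + move=> a c [e [he [h1 h2]]]; exists (~` e); split; first exact: cons_compl hMT _ he.
    by rewrite !leC.
  + move=> a c [e [he [h1 h2]]]; exists e; split.
      by exists e; rewrite lexx.
    by exists e; rewrite lexx.
  + move=> a; split; first by move=> c [e [_ [h1 h2]]]; exact: le_trans h2.
    move=> u hu; case: (hTD a) => S [hS [hSa hSu]]; apply: hSu => x Sx.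
    apply: hu; exists x; split; first by apply: cons_LC; exact: hS.
    by rewrite lexx hSa.
Qed.
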